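(* Fix $k\ge1$. For every $j\ge2$, $$q(j+1)-q(j)=\begin{cases}F_{2k}&\text{if the }(j-1)\text{th letter of }\mathcal S\text{ is }A,\\ F_{2k+1}&\text{if the }(j-1)\text{th letter of }\mathcal S\text{ is }B.\end{cases}$$
   Context: Fibonacci numbers: $F_1=F_2=1$, $F_{n+1}=F_n+F_{n-1}$ for $n\ge2$. Chung–Graham decomposition: every positive integer $n$ has a unique representation $n=\sum_{i\ge1}c_iF_{2i}$ with $c_i\in\{0,1,2\}$, only finitely many nonzero, such that whenever $c_i=c_j=2$ with $i<j$ there is $k$ with $i<k<j$ and $c_k=0$. Let $\mathcal{CG}(n)$ be the set of $F_{2i}$ with $c_i\neq0$. For $k\ge1$, $A_{2k}=\{n\ge1:\min\mathcal{CG}(n)=F_{2k}\}$, and $q(1)<q(2)<q(3)<\cdots$ denote the elements of $A_{2k}$ listed in increasing order. Golden string: define finite words over $\{A,B\}$ by $S_1=B$, $S_2=BA$, $S_n=S_{n-1}:S_{n-2}$ for $n\ge3$, where $:$ denotes concatenation; each $S_n$ is a prefix of $S_{n+1}$, and $\mathcal S$ is the infinite word having every $S_n$ as a prefix ($\mathcal S=BABBABABBABB\ldots$). Letters of $\mathcal S$ are indexed starting at $1$. *)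

(* Defs.v *)
From mathcomp Require Import all_boot.
Set Implicit Arguments. Unset Strict Implicit. Unset Printing Implicit Defensive.

Fixpoint F (n : nat) : nat :=
  match n with
  | 0 => 0
  | 1 => 1
  | (m.+1 as p).+1 => F p + F m
  end.

(* A coefficient list s = [:: c_1; c_2; ...; c_L] (c_i = nth 0 s (i-1)),
   all later coefficients being 0. *)
Definition cg_value (s : seq nat) : nat :=
  \sum_(i < size s) nth 0 s i * F (2 * i.+1).

Definition CG_rep (s : seq nat) (n : nat) : Prop :=
  [/\ all (fun c => c <= 2) s,
      (forall i j, i < j -> j < size s -> nth 0 s i = 2 -> nth 0 s j = 2 ->
         exists l, i < l < j /\ nth 0 s l = 0)
    & cg_value s = n].

Definition in_CG (s : seq nat) (x : nat) : Prop :=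
  exists i, 1 <= i /\ nth 0 s i.-1 <> 0 /\ x = F (2 * i).

(* n \in A_{2k} : n >= 1 and min CG(n) = F_{2k}
   (CG(n) computed from the (unique) Chung--Graham decomposition of n). *)
Definition in_A (k n : nat) : Prop :=
  1 <= n /\
  exists s, CG_rep s n /\ in_CG s (F (2 * k)) /\
            (forall x, in_CG s x -> F (2 * k) <= x).

Definition enumerates_A (k : nat) (q : nat -> nat) : Prop :=
  (forall j, 1 <= j -> q j < q j.+1) /\
  (forall n, in_A k n <-> exists j, 1 <= j /\ q j = n).

Inductive letter := LA | LB.

Fixpoint Sw (n : nat) : seq letter :=
  match n with
  | 0 => [:: LB]            (* unused *)
  | 1 => [:: LB]
  | 2 => [:: LB; LA]
  | (m.+1 as p).+1 => Sw p ++ Sw m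
  end.

(* The i-th letter (1-indexed) of the infinite word S: read it off S_i,
   which has length F_{i+1} >= i and is a prefix of S. *)
Definition golden_letter (i : nat) : letter := nth LA (Sw i) i.-1.

(* Main.v *)
Require Import Defs.
From mathcomp Require Import all_boot zify.
Set Implicit Arguments. Unset Strict Implicit.


Lemma FS m : F m.+2 = F m.+1 + F m. Proof. by []. Qed.

Lemma F_pos m : 1 <= m -> 1 <= F m.
Proof.
elim/ltn_ind: m => [[|[|[|m]]]] IH // _.
rewrite FS; have := IH m.+2 (ltnSn _) isT; lia.
Qed.

Lemma F_le_S m : F m <= F m.+1.
Proof. case: m => [|m] //; rewrite FS; lia. Qed.

Lemma F_mono m n : m <= n -> F m <= F n.
Proof.
move=> /subnKC <-; elim: (n - m) => [|d IH]; first by rewrite addn0.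
by rewrite addnS; apply: leq_trans IH (F_le_S _).
Qed.

Lemma F_lt_S m : 2 <= m -> F m < F m.+1.
Proof. case: m => [|[|m]] // _; rewrite (FS m.+1); have := F_pos (m:=m.+1) isT; lia. Qed.

Lemma F_strict m n : 2 <= m -> m < n -> F m < F n.
Proof.
move=> hm /subnKC <-; elim: (n - m.+1) => [|d IH]; first by rewrite addn0 F_lt_S.
rewrite addnS; apply: leq_trans IH (F_le_S _).
Qed.

Lemma F_ge m : m <= F m.+1.
Proof.
elim/ltn_ind: m => [[|[|m]]] IH //.
rewrite FS; have := IH m.+1 (ltnSn _); have := F_pos (m:=m.+1) isT; lia.
Qed.

Lemma F_add m n : F (m + n).+1 = F m.+1 * F n.+1 + F m * F n.
Proof.
elim: m n => [|m IH] n; first by rewrite add0n /=; lia.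
rewrite addSn -addnS IH FS FS; lia.
Qed.


Definition isA (x : letter) : bool := if x is LA then true else false.
Definition isB (x : letter) : bool := if x is LB then true else false.
Definition G := golden_letter.

Lemma SwS m : 1 <= m -> Sw m.+2 = Sw m.+1 ++ Sw m.
Proof. by case: m. Qed.

Lemma size_Sw m : 1 <= m -> size (Sw m) = F m.+1.
Proof.
elim/ltn_ind: m => [[|[|[|m]]]] IH // _.
by rewrite SwS // size_cat !IH // FS.
Qed.

Lemma count_Sw m : 1 <= m -> count isA (Sw m) = F m.-1 /\ count isB (Sw m) = F m.
Proof.
elim/ltn_ind: m => [[|[|[|m]]]] IH // _.
rewrite SwS // !count_cat.
have [a1 b1] := IH m.+2 (ltnSn _) isT.
have [a2 b2] := IH m.+1 (leqW (ltnSn _)) isT.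
rewrite a1 b1 a2 b2 /=; split; rewrite ?FS; lia.
Qed.

Lemma Sw_ext m : 1 <= m -> exists r, Sw m.+1 = Sw m ++ r.
Proof.
case: m => [|[|m]] // _; first by exists [:: LA].
by exists (Sw m.+1); rewrite SwS.
Qed.

Lemma nth_Sw_mono m m' i : 1 <= m -> m <= m' -> i < size (Sw m) ->
  nth LA (Sw m') i = nth LA (Sw m) i.
Proof.
move=> hm /subnKC <- hi; elim: (m' - m) => [|d IH]; first by rewrite addn0.
rewrite addnS.
have [r ->] := Sw_ext (m := m + d) (leq_trans hm (leq_addr _ _)).
rewrite nth_cat IH.
have -> // : i < size (Sw (m + d)).
elim: d {IH} => [|d IH]; first by rewrite addn0.
rewrite addnS.
have [r' ->] := Sw_ext (m := m + d) (leq_trans hm (leq_addr _ _)).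
by rewrite size_cat; apply: leq_trans IH (leq_addr _ _).
Qed.

Lemma G1 m i : 1 <= m -> 1 <= i -> i <= F m.+1 -> nth LA (Sw m) i.-1 = G i.
Proof.
move=> hm hi him; rewrite /G /golden_letter.
have hsi : i.-1 < size (Sw i) by rewrite size_Sw //; have := F_ge i; lia.
have hsm : i.-1 < size (Sw m) by rewrite size_Sw //; lia.
case: (leqP m i) => h.
  by rewrite (nth_Sw_mono (m:=m) (m':=i)).
by rewrite (nth_Sw_mono (m:=i) (m':=m)) // ltnW.
Qed.

Lemma GB m i : 2 <= m -> 1 <= i -> i <= F m -> G (F m.+1 + i) = G i.
Proof.
move=> hm hi him.
have h2 : F m.+1 + i <= F m.+2 by rewrite (FS m); lia.
rewrite -(G1 (m:=m.+1)) //; last by lia.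
case: m hm him h2 => [|m] // hm him h2.
rewrite SwS; last by lia.
have hs : size (Sw m.+1) = F m.+2 by rewrite size_Sw.
rewrite nth_cat hs.
have -> : (F m.+2 + i).-1 < F m.+2 = false by lia.
have -> : (F m.+2 + i).-1 - F m.+2 = i.-1 by lia.
by rewrite G1 //; lia.
Qed.

Lemma GH m i : 1 <= i -> i + 2 <= F m.+1 -> G (F m + i) = G i.
Proof.
elim/ltn_ind: m i => m IH i hi him.
case: m IH him => [|[|[|m]]] IH him.
- by move: him; rewrite [F 1]/=; lia.
- by move: him; rewrite [F 2]/=; lia.
- by move: him; rewrite [F 3]/=; lia.
have e4 := FS m.+2.
case: (leqP i (F m.+2)) => h.
  by rewrite GB.
have -> : F m.+3 + i = F m.+4 + (i - F m.+2) by lia.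
rewrite GB //; [|lia|lia].
rewrite -(IH m.+2 (ltnSn _) (i - F m.+2)); [|lia|lia].
by congr G; lia.
Qed.

Lemma GE n : 1 <= n -> G (F (2 * n).+1) = LA.
Proof.
elim: n => [|n IH] // _.
case: n IH => [|n] IH; first by [].
have -> : (2 * n.+2).+1 = (2 * n.+1).+1.+2 by lia.
rewrite (FS (2 * n.+1).+1) GB //; try lia.
- by rewrite IH.
- by have := F_pos (m := (2 * n.+1).+1) isT; lia.
Qed.


Definition W (i : nat) : letter := if i is 1 then LA else G i.-1.
Definition cnt (p : letter -> bool) (j : nat) : nat := \sum_(i < j.-1) p (W i.+1).

Lemma cnt_S p j : 1 <= j -> cnt p j.+1 = cnt p j + p (W j).
Proof.
move=> hj; rewrite /cnt /=; case: j hj => [|j] // _.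
by rewrite big_ord_recr.
Qed.

Lemma cnt1 p : cnt p 1 = 0.
Proof. by rewrite /cnt big_ord0. Qed.

Lemma sum_nth_count (a : pred letter) s :
  \sum_(i < size s) a (nth LA s i) = count a s.
Proof.
elim: s => [|x s IH]; first by rewrite big_ord0.
by rewrite /= big_ord_recl /= IH.
Qed.

Lemma sumG (p : pred letter) m : 1 <= m -> \sum_(i < F m.+1) p (G i.+1) = count p (Sw m).
Proof.
move=> hm; rewrite -sum_nth_count size_Sw //.
apply: eq_bigr => i _; rewrite -(G1 (m:=m)) //.

Qed.

Lemma GL_A n : 1 <= n -> G (F (2 * n).+1) = LA.
Proof. exact: GE. Qed.

Lemma L_ge2 n : 1 <= n -> 2 <= F (2 * n).+1.
Proof.
move=> hn; have := F_mono (m := 3) (n := (2 * n).+1); rewrite [F 3]/=; lia.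
Qed.

Lemma sum_last (p : pred letter) m : 1 <= m ->
  \sum_(i < m) p (G i.+1) = \sum_(i < m.-1) p (G i.+1) + p (G m).
Proof. by case: m => // m _; rewrite big_ord_recr. Qed.

Lemma C1 n : 1 <= n ->
  cnt isA (F (2 * n).+1).+1 = F (2 * n).-1 /\ cnt isB (F (2 * n).+1).+1 = F (2 * n).
Proof.
move=> hn; have hL := L_ge2 hn.
have [cA cB] := count_Sw (m := 2 * n) (ltac:(lia)).
have eA := sumG isA (m := 2 * n) (ltac:(lia)).
have eB := sumG isB (m := 2 * n) (ltac:(lia)).
have hGL := GE hn.
set L := F (2 * n).+1 in hL eA eB hGL *.
rewrite (sum_last isA) in eA; last by lia. rewrite hGL in eA.
rewrite (sum_last isB) in eB; last by lia. rewrite hGL in eB.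
have -> : L = (L.-1).+1 by lia.
rewrite /cnt !big_ord_recl.
have hW (i : 'I_L.-1) : W (lift ord0 i).+1 = G i.+1 by rewrite lift0.
split.
- under eq_bigr => i _ do rewrite hW.
  by rewrite -cA -eA /=; lia.
- under eq_bigr => i _ do rewrite hW.
  by rewrite -cB -eB /=; lia.
Qed.

Lemma W_gt1 i : 2 <= i -> W i = G i.-1.
Proof. by case: i => [|[|i]]. Qed.

Lemma C2 n i : 1 <= n -> 1 <= i -> i < F (2 * n).+1 ->
  W (F (2 * n).+1 + i) = W i.
Proof.
move=> hn hi hiL.
have e2 := FS (2 * n).
have hp := F_pos (m := 2 * n) (ltac:(lia)).
have hL := L_ge2 hn.
rewrite W_gt1; last by lia.
case: (ltnP 1 i) => h.
- rewrite W_gt1 //.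
  have -> : (F (2 * n).+1 + i).-1 = F (2 * n).+1 + i.-1 by lia.
  rewrite GH //; lia.
- have -> : i = 1 by lia.
  by rewrite addn1 /= GE.
Qed.

Lemma C3 n : 1 <= n -> W (F (2 * n).+1 + F (2 * n).+1) = W (F (2 * n).+1).
Proof.
move=> hn; have hL := L_ge2 hn.
have e2 := FS (2 * n).
have hp := F_pos (m := 2 * n) (ltac:(lia)).
rewrite !W_gt1; try lia.
have -> : (F (2 * n).+1 + F (2 * n).+1).-1 = F (2 * n).+1 + (F (2 * n).+1).-1 by lia.
rewrite GH //; lia.
Qed.

Lemma C4 n i : 1 <= n -> 1 <= i -> i < F (2 * n) ->
  W (F (2 * n).+1 + F (2 * n).+1 + i) = W i.
Proof.
move=> hn hi hiL.
have e2 := FS (2 * n).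
have hL := L_ge2 hn.
rewrite W_gt1; last by lia.
have -> : (F (2 * n).+1 + F (2 * n).+1 + i).-1 = F (2 * n).+1 + (F (2 * n).+1 + i.-1) by lia.
rewrite GH; [|lia|lia].
case: (ltnP 1 i) => h.
- rewrite W_gt1 // GH //; lia.
- have -> : i = 1 by lia.
  rewrite addn0 GE //.
Qed.

Definition Pr (p : letter -> bool) n := cnt p (F (2 * n).+1).+1.

Lemma P1 p n j : 1 <= n -> 1 <= j -> j <= F (2 * n).+1 ->
  cnt p (F (2 * n).+1 + j) = cnt p j + Pr p n.
Proof.
move=> hn; elim: j => [|j IH] // _ hj.
case: (ltnP 0 j) => hj0.
- rewrite addnS cnt_S; last by lia.
  rewrite IH //; last by lia.
  rewrite (C2 hn hj0); last by lia.
  rewrite cnt_S //; lia.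
- have -> : j = 0 by lia.
  by rewrite cnt1 addn1.
Qed.

Lemma P2 p n j : 1 <= n -> 1 <= j -> j <= F (2 * n) ->
  cnt p (F (2 * n).+1 + F (2 * n).+1 + j) = cnt p j + 2 * Pr p n.
Proof.
move=> hn; have hL := L_ge2 hn.
elim: j => [|j IH] // _ hj.
case: (ltnP 0 j) => hj0.
- rewrite addnS cnt_S; last by lia.
  rewrite IH //; last by lia.
  rewrite (C4 hn hj0); last by lia.
  rewrite cnt_S //; lia.
- have -> : j = 0 by lia.
  rewrite cnt1 addn1 cnt_S; last by lia.
  rewrite P1 //; last by lia.
  rewrite C3 // /Pr.
  have -> : (F (2 * n).+1).+1 = (F (2 * n).+1).-1.+2 by lia.
  rewrite cnt_S; last by lia.
  have -> : (F (2 * n).+1).-1.+1 = F (2 * n).+1 by lia.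
  lia.
Qed.


Definition FX i := if i is 0 then 1 else F (2 * i).-1.
Definition FY i := F (2 * i).
Definition PX (f : nat -> nat) n := \sum_(i < n) f i * FX i.
Definition PY (f : nat -> nat) n := \sum_(i < n) f i * FY i.
Definition bnd (f : nat -> nat) n := forall i, i < n -> f i <= 2.
Definition v2 (f : nat -> nat) n := forall i j, i < j -> j < n -> f i = 2 -> f j = 2 ->
  exists l, i < l < j /\ f l = 0.
Definition top (f : nat -> nat) n := forall i, i < n -> f i = 2 ->
  exists l, i < l < n /\ f l = 0.
Definition onpath f n j := PX f n = 1 + cnt isA j /\ PY f n = cnt isB j.
Definition upd (f : nat -> nat) n c := fun i => if i == n then c else f i.

Lemma PX_S f n : PX f n.+1 = PX f n + f n * FX n.
Proof. by rewrite /PX big_ord_recr. Qed.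
Lemma PY_S f n : PY f n.+1 = PY f n + f n * FY n.
Proof. by rewrite /PY big_ord_recr. Qed.

Lemma PX_upd f n c : PX (upd f n c) n.+1 = PX f n + c * FX n.
Proof.
rewrite PX_S /upd eqxx; congr (_ + _); apply: eq_bigr => i _.
by rewrite (ltn_eqF (ltn_ord i)).
Qed.
Lemma PY_upd f n c : PY (upd f n c) n.+1 = PY f n + c * FY n.
Proof.
rewrite PY_S /upd eqxx; congr (_ + _); apply: eq_bigr => i _.
by rewrite (ltn_eqF (ltn_ord i)).
Qed.

Lemma upd_lt f n c i : i < n -> upd f n c i = f i.
Proof. by move=> h; rewrite /upd (ltn_eqF h). Qed.

Lemma upd_eq f n c : upd f n c n = c.
Proof. by rewrite /upd eqxx. Qed.

Lemma upd_ok f n c : bnd f n -> v2 f n -> c <= 2 -> (c = 2 -> top f n) ->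
  bnd (upd f n c) n.+1 /\ v2 (upd f n c) n.+1.
Proof.
move=> hb hv hc ht; split.
- move=> i; rewrite ltnS leq_eqVlt => /orP [/eqP ->|h].
    by rewrite upd_eq.
  by rewrite upd_lt // hb.
- move=> i j hij; rewrite ltnS leq_eqVlt => /orP [/eqP hjn|h].
    subst j; rewrite (upd_lt _ _ hij) upd_eq => fi2 c2.
    have [l [hl1 hl2]] := ht c2 i hij fi2.
    by exists l; rewrite upd_lt //; move/andP: hl1 => [_ ->].
  rewrite !upd_lt //; last by apply: ltn_trans h.
  move=> fi fj; have [l [hl1 hl2]] := hv i j hij h fi fj.
  have hl : l < n by move/andP: hl1 => [_ hl]; apply: ltn_trans hl h.
  by exists l; rewrite upd_lt.
Qed.

Lemma top_upd f n c : (c = 0 \/ (c = 1 /\ top f n)) -> top (upd f n c) n.+1.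
Proof.
move=> hc i; rewrite ltnS leq_eqVlt => /orP [/eqP ->|h].
  by rewrite upd_eq; case: hc => [->|[->]].
rewrite upd_lt // => fi.
case: hc => [c0|[c1 ht]].
  by exists n; rewrite upd_eq h ltnSn.
have [l [/andP [hl1 hl2] hl3]] := ht i h fi.
exists l; rewrite upd_lt //; split=> //; rewrite hl1 /=; lia.
Qed.

Lemma bnd_S f n : bnd f n.+1 -> bnd f n.
Proof. by move=> h i hi; apply: h; lia. Qed.
Lemma v2_S f n : v2 f n.+1 -> v2 f n.
Proof. by move=> h i j hij hj; apply: h => //; lia. Qed.
Lemma v2_top f n : v2 f n.+1 -> f n = 2 -> top f n.
Proof. by move=> h hn i hi fi; apply: h. Qed.
Lemma top_S f n : top f n.+1 -> f n <> 2 /\ (f n <> 0 -> top f n).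
Proof.
move=> h; split.
  by move=> fn; have [l [/andP [h1 h2] _]] := h n (ltnSn _) fn; lia.
move=> fn0 i hi fi; have [l [/andP [h1 h2] h3]] := h i (leqW hi) fi.
exists l; split => //; rewrite h1 /=.
case: (ltnP l n) => // hl; have hln : l = n by lia.
by rewrite hln in h3.
Qed.

Lemma FXn n : 1 <= n -> Pr isA n = FX n.
Proof. by move=> hn; rewrite /Pr (C1 hn).1; case: n hn. Qed.
Lemma FYn n : 1 <= n -> Pr isB n = FY n.
Proof. by move=> hn; rewrite /Pr (C1 hn).2. Qed.

Lemma cnt2 p : cnt p 2 = p LA.
Proof. by rewrite cnt_S // cnt1. Qed.


Lemma step0 f n j : onpath f n j -> f n = 0 -> onpath f n.+1 j.
Proof. by move=> [hx hy] h; rewrite /onpath PX_S PY_S h hx hy !mul0n !addn0. Qed.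

Lemma step1 f n j : 1 <= n -> onpath f n j -> f n = 1 -> 1 <= j -> j <= F (2 * n).+1 ->
  onpath f n.+1 (F (2 * n).+1 + j).
Proof.
move=> hn [hx hy] h hj hjL; rewrite /onpath PX_S PY_S h hx hy !P1 // FXn // FYn //; lia.
Qed.

Lemma step2 f n j : 1 <= n -> onpath f n j -> f n = 2 -> 1 <= j -> j <= F (2 * n) ->
  onpath f n.+1 (F (2 * n).+1 + F (2 * n).+1 + j).
Proof.
move=> hn [hx hy] h hj hjL; rewrite /onpath PX_S PY_S h hx hy !P2 // FXn // FYn //; lia.
Qed.

Lemma PX_ext f g n : (forall i, i < n -> f i = g i) -> PX f n = PX g n.
Proof. by move=> h; apply: eq_bigr => i _; rewrite h. Qed.
Lemma PY_ext f g n : (forall i, i < n -> f i = g i) -> PY f n = PY g n.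
Proof. by move=> h; apply: eq_bigr => i _; rewrite h. Qed.

Lemma onpath_upd f n c j : onpath f n j -> onpath (upd f n c) n j.
Proof.
move=> [hx hy]; rewrite /onpath (PX_ext (g := f)) ?(PY_ext (g := f)) //;
  by move=> i hi; rewrite upd_lt.
Qed.

Lemma base_x f : PX f 1 = f 0.
Proof. by rewrite /PX big_ord_recr big_ord0 /= muln1. Qed.
Lemma base_y f : PY f 1 = 0.
Proof. by rewrite /PY big_ord_recr big_ord0 /= muln0. Qed.

Lemma ab n : 1 <= n -> forall f, bnd f n -> v2 f n -> f 0 <> 0 ->
  (exists j, [/\ 1 <= j, j <= F (2 * n).+1 & onpath f n j]) /\
  (top f n -> exists j, [/\ 1 <= j, j <= F (2 * n) & onpath f n j]).
Proof.
elim: n => [|n IH] // _ f hb hv h0.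
case: (posnP n) => hn.
- subst n.
  have hf0 := hb 0 isT.
  split.
  + exists (f 0); split => //; first by lia.
    rewrite /onpath base_x base_y.
    have : f 0 = 1 \/ f 0 = 2 by lia.
    by case=> ->; rewrite ?cnt1 ?cnt2 ?cnt1.
  + move=> ht; have [ht2 _] := top_S ht.
    exists 1; split => //; rewrite /onpath base_x base_y !cnt1.
    split => //; lia.
have e3 := FS (2 * n).+1.
have e2 := FS (2 * n).
have -> : 2 * n.+1 = (2 * n).+2 by lia.
have hle := F_le_S (2 * n).
have hfb : f n <= 2 := hb n (ltnSn _).
have [IHa IHb] := IH hn f (bnd_S hb) (v2_S hv) h0.
have [j [hj1 hj2 hjp]] := IHa.
have hn1 : 1 <= n by lia.
case: (ltnP 2 (f n)) => hc; first by lia.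
have : f n = 0 \/ f n = 1 \/ f n = 2 by lia.
case=> [c0|[c1|c2]].
- split.
  + by exists j; split => //; [lia | apply: step0].
  + by move=> _; exists j; split => //; [lia | apply: step0].
- split.
  + exists (F (2 * n).+1 + j); split; [lia|lia|].
    exact: step1.
  + move=> ht; have [_ ht'] := top_S ht.
    have [j' [hj1' hj2' hjp']] := IHb (ht' ltac:(by rewrite c1)).
    exists (F (2 * n).+1 + j'); split; [lia|lia|].
    apply: step1 => //; lia.
- split.
  + have [j' [hj1' hj2' hjp']] := IHb (v2_top hv c2).
    exists (F (2 * n).+1 + F (2 * n).+1 + j'); split; [lia|lia|].
    exact: step2.
  + by move=> ht; have [ht2 _] := top_S ht.
Qed.

Lemma cd n : 1 <= n ->
  (forall j, 1 <= j -> j <= F (2 * n).+1 ->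
     exists f, [/\ bnd f n, v2 f n, f 0 <> 0 & onpath f n j]) /\
  (forall j, 1 <= j -> j <= F (2 * n) ->
     exists f, [/\ bnd f n, v2 f n, f 0 <> 0, top f n & onpath f n j]).
Proof.
elim: n => [|n IH] // _.
case: (posnP n) => hn.
- subst n; have hF3 : F (2 * 1).+1 = 2 by []; have hF2 : F (2 * 1) = 1 by [].
  rewrite hF3 hF2; split.
  + move=> j hj hj2; exists (fun _ => j); split.
    * by move=> i _; lia.
    * by move=> i k hik hk; lia.
    * by lia.
    * rewrite /onpath base_x base_y.
      have : j = 1 \/ j = 2 by lia.
      by case=> ->; rewrite ?cnt1 ?cnt2 ?cnt1.
  + move=> j hj hj2; have -> : j = 1 by lia.
    exists (fun _ => 1); split => //.
    * by rewrite /onpath base_x base_y !cnt1; split.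
have e3 := FS (2 * n).+1.
have e2 := FS (2 * n).
have -> : 2 * n.+1 = (2 * n).+2 by lia.
have hle := F_le_S (2 * n).
have hn1 : 1 <= n by lia.
have [IHc IHd] := IH hn1.
have hz f c : f 0 <> 0 -> upd f n c 0 <> 0 by move=> h; rewrite upd_lt.
split.
- move=> j hj hj2.
  case: (leqP j (F (2 * n).+1)) => h1.
    have [f [hb hv h0 hp]] := IHc j hj h1.
    have [hb' hv'] := upd_ok (c := 0) hb hv isT (fun e => False_ind _ (ltac:(done))).
    exists (upd f n 0); split => //; first exact: hz.
    apply: step0; [exact: onpath_upd | exact: upd_eq].
  case: (leqP j (F (2 * n).+1 + F (2 * n).+1)) => h2.
    have [f [hb hv h0 hp]] := IHc (j - F (2 * n).+1) ltac:(lia) ltac:(lia).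
    have [hb' hv'] := upd_ok (c := 1) hb hv isT (fun e => False_ind _ (ltac:(done))).
    exists (upd f n 1); split => //; first exact: hz.
    have -> : j = F (2 * n).+1 + (j - F (2 * n).+1) by lia.
    apply: step1 => //; [exact: onpath_upd | exact: upd_eq | lia | lia].
  have [f [hb hv h0 ht hp]] := IHd (j - F (2 * n).+1 - F (2 * n).+1) ltac:(lia) ltac:(lia).
  have [hb' hv'] := upd_ok (c := 2) hb hv isT (fun _ => ht).
  exists (upd f n 2); split => //; first exact: hz.
  have -> : j = F (2 * n).+1 + F (2 * n).+1 + (j - F (2 * n).+1 - F (2 * n).+1) by lia.
  apply: step2 => //; [exact: onpath_upd | exact: upd_eq | lia | lia].
- move=> j hj hj2.
  case: (leqP j (F (2 * n).+1)) => h1.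
    have [f [hb hv h0 hp]] := IHc j hj h1.
    have [hb' hv'] := upd_ok (c := 0) hb hv isT (fun e => False_ind _ (ltac:(done))).
    exists (upd f n 0); split => //; first exact: hz.
      by apply: top_upd; left.
    apply: step0; [exact: onpath_upd | exact: upd_eq].
  have [f [hb hv h0 ht hp]] := IHd (j - F (2 * n).+1) ltac:(lia) ltac:(lia).
  have [hb' hv'] := upd_ok (c := 1) hb hv isT (fun e => False_ind _ (ltac:(done))).
  exists (upd f n 1); split => //; first exact: hz.
    by apply: top_upd; right.
  have -> : j = F (2 * n).+1 + (j - F (2 * n).+1) by lia.
  apply: step1 => //; [exact: onpath_upd | exact: upd_eq | lia | lia].
Qed.

Arguments F : simpl never.

Lemma Fid k i : 1 <= k -> F (2 * (k.-1 + i).+1) = FX i * F (2 * k) + FY i * F (2 * k).+1.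
Proof.
move=> hk; case: i => [|i].
  have -> : FY 0 = 0 by []. have -> : FX 0 = 1 by [].
  by rewrite addn0 prednK // mul1n mul0n addn0.
have -> : 2 * (k.-1 + i.+1).+1 = ((2 * i.+1).-1 + 2 * k).+1 by lia.
rewrite F_add /FX /FY.
have -> : ((2 * i.+1).-1).+1 = 2 * i.+1 by lia.
lia.
Qed.

Lemma nth_s a (f : nat -> nat) N i :
  nth 0 (nseq a 0 ++ mkseq f N) i = if (a <= i) && (i < a + N) then f (i - a) else 0.
Proof.
rewrite nth_cat size_nseq nth_nseq.
case: (ltnP i a) => h /=.
  by [].
case: (ltnP i (a + N)) => h2.
  by rewrite nth_mkseq //; lia.
by rewrite nth_default // size_mkseq; lia.
Qed.

Lemma val_shift k f N : 1 <= k ->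
  cg_value (nseq k.-1 0 ++ mkseq f N) = PX f N * F (2 * k) + PY f N * F (2 * k).+1.
Proof.
move=> hk; rewrite /cg_value size_cat size_nseq size_mkseq big_split_ord /=.
rewrite big1 ?add0n; last first.
  move=> i _; rewrite nth_s /=; have := ltn_ord i => hi; have -> : k.-1 <= i = false by lia. by rewrite mul0n.
rewrite /PX /PY !big_distrl -big_split /=; apply: eq_bigr => i _.
rewrite nth_s leq_addr /= ltn_add2l ltn_ord /= addKn Fid //; lia.
Qed.

Definition g k j := (1 + cnt isA j) * F (2 * k) + cnt isB j * F (2 * k).+1.

Lemma g_S k j : 1 <= j ->
  g k j.+1 = g k j + (if W j is LA then F (2 * k) else F (2 * k).+1).
Proof.
move=> hj; rewrite /g !cnt_S //; case: (W j) => /=; lia.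
Qed.

Lemma inA_g k n : 1 <= k -> (in_A k n <-> exists j, 1 <= j /\ g k j = n).
Proof.
move=> hk; have hFk := F_pos (m := 2 * k) (ltac:(lia)).
split.
- move=> [hn [s [[hall hval hsum] [[i0 [hi0 [hnz hF]]] hmin]]]].
  have hi0k : i0 = k.
    case: (ltngtP i0 k) => // h.
    + have := F_strict (m := 2 * i0) (n := 2 * k) ltac:(lia) ltac:(lia); lia.
    + have := F_strict (m := 2 * k) (n := 2 * i0) ltac:(lia) ltac:(lia); lia.
  subst i0.
  have hz : forall i, i < k.-1 -> nth 0 s i = 0.
    move=> i hi; apply/eqP; apply/negPn/negP => /eqP hne.
    have := hmin (F (2 * i.+1)) (ex_intro _ i.+1 (conj isT (conj hne erefl))).
    have := F_strict (m := 2 * i.+1) (n := 2 * k) ltac:(lia) ltac:(lia); lia.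
  have hsz : k.-1 < size s.
    case: (ltnP k.-1 (size s)) => // h; by rewrite nth_default in hnz.
  set a := k.-1 in hz hsz hnz.
  set N := size s - a.
  set f := fun i => nth 0 s (a + i).
  have hs : s = nseq a 0 ++ mkseq f N.
    apply: (@eq_from_nth _ 0); first by rewrite size_cat size_nseq size_mkseq /N; lia.
    move=> i hi; rewrite nth_s.
    case: (ltnP i a) => h /=; first by rewrite hz.
    rewrite /N; have -> : i < a + (size s - a) by lia.
    by rewrite /f; congr nth; lia.
  have hN : 1 <= N by rewrite /N; lia.
  have hb : bnd f N.
    move=> i hi; rewrite /f; move/all_nthP: hall => /(_ 0 (a + i)) h; apply: h; rewrite /N in hi; lia.
  have hv : v2 f N.
    move=> i j hij hj fi fj.
    have [l [/andP [h1 h2] h3]] := hval (a + i) (a + j) ltac:(lia) ltac:(rewrite /N in hj; lia) fi fj.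
    exists (l - a); split; first by lia.
    by rewrite /f; have -> : a + (l - a) = l by lia.
  have h0 : f 0 <> 0 by rewrite /f addn0.
  have [[j [hj1 hj2 [hx hy]]] _] := ab hN hb hv h0.
  exists j; split => //.
  by rewrite -hsum hs val_shift // /g hx hy.
- move=> [j [hj <-]].
  have hjN : j <= F (2 * j).+1.
    apply: leq_trans (F_ge j) (F_mono _); lia.
  have [hc _] := cd hj.
  have [f [hb hv h0 [hx hy]]] := hc j hj hjN.
  set a := k.-1.
  have hka : k = a.+1 by rewrite /a; lia.
  split; first by rewrite /g; nia.
  exists (nseq a 0 ++ mkseq f j); split; [split|split].
  + apply/(all_nthP 0) => i hi; rewrite nth_s.
    case: ifP => // /andP [h1 h2]; apply: hb; lia.
  + move=> i l hil hl; rewrite !nth_s.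
    case: ifP => [/andP [h1 h2]|]; last by lia.
    case: ifP => [/andP [h3 h4]|]; last by lia.
    move=> fi fl; have [m [/andP [hm1 hm2] hm3]] := hv (i - a) (l - a) ltac:(lia) ltac:(lia) fi fl.
    exists (a + m); split; first by lia.
    rewrite nth_s; have -> : (a <= a + m) && (a + m < a + j) by apply/andP; lia.
    by have -> : a + m - a = m by lia.
  + by rewrite val_shift // /g hx hy.
  + exists k; split => //; split => //.
    rewrite hka /= nth_s leqnn subnn; have -> : a < a + j by lia. by [].
  + move=> x [i [hi [hne ->]]]; apply: F_mono.
    move: hne; rewrite nth_s; case: ifP => [/andP [h1 _] _|]; last by [].
    lia.
Qed.

Lemma same_enum (f1 f2 : nat -> nat) :
  (forall j, 1 <= j -> f1 j < f1 j.+1) -> (forall j, 1 <= j -> f2 j < f2 j.+1) ->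
  (forall n, (exists j, 1 <= j /\ f1 j = n) <-> (exists j, 1 <= j /\ f2 j = n)) ->
  forall j, 1 <= j -> f1 j = f2 j.
Proof.
move=> h1 h2 hr.
have mono (f : nat -> nat) : (forall j, 1 <= j -> f j < f j.+1) ->
    forall i j, 1 <= i -> i < j -> f i < f j.
  move=> hf i j hi /subnKC <-; elim: (j - i.+1) => [|d IH]; first by rewrite addn0 hf.
  by rewrite addnS; apply: ltn_trans IH (hf _ _); lia.
elim/ltn_ind=> j IH hj.
have [i [hi e1]] := (hr (f1 j)).1 (ex_intro _ j (conj hj erefl)).
have [l [hl e2]] := (hr (f2 j)).2 (ex_intro _ j (conj hj erefl)).
case: (ltngtP i j) => hij.
- have := IH i hij hi; rewrite e1 => e.
  have := mono f1 h1 i j hi hij; lia.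
- have := mono f2 h2 j i hj hij; rewrite e1 => hlt.
  case: (ltnP l j) => hlj.
  + have := IH l hlj hl; rewrite e2 => e.
    have := mono f2 h2 l j hl hlj; lia.
  + rewrite -e2 in hlt.
    case: (ltngtP l j) hlj => // hlj' _.
    * have := mono f1 h1 j l hj hlj'; lia.
    * subst l; lia.
- by subst i.
Qed.

Unset Implicit Arguments.

Theorem lemma4p2 (k : nat) (hk : 1 <= k) (q : nat -> nat)
  (hq : enumerates_A k q) (j : nat) (hj : 2 <= j) :
  q j.+1 - q j =
    (if golden_letter j.-1 is LA then F (2 * k) else F (2 * k).+1).
Proof.
have hFk := F_pos (m := 2 * k) (ltac:(lia)).
have hg : forall j, 1 <= j -> g k j < g k j.+1.
  move=> i hi; rewrite g_S //; have := F_pos (m := (2 * k).+1) isT; case: (W i) => /=; lia.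
have he : forall i, 1 <= i -> q i = g k i.
  apply: same_enum => //; first by case: hq.
  move=> n; rewrite -(inA_g n hk); case: hq => _ h; by rewrite h.
rewrite !he //; last by lia.
rewrite g_S; last by lia.
rewrite W_gt1 //.
by rewrite /G addKn.
Qed.
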